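(* Let $T$ be an $\omega_2$-Kurepa-tree, for each $\alpha<\omega_2$ let $\xi\mapsto\tau(\alpha,\xi)$ be a map from $\omega_1$ onto the level $T_\alpha$, and let $A_\iota$ ($\iota<\omega_2$) be unbounded subsets of $\omega_2$. Then there is a cofinal branch $b$ through $T$ that oscillates on every $A_\iota$, $\iota<\omega_2$.
   Context: An $\omega_2$-Kurepa-tree is a tree of height $\omega_2$ all of whose levels have size $\leq\aleph_1$ and which has at least $\aleph_3$ cofinal ($\omega_2$-)branches. Given the enumeration $\tau$, a cofinal branch $b$ is identified with the function $b:\omega_2\to\omega_1$ where $b(\alpha)$ is the least $\xi$ such that $\tau(\alpha,\xi)$ is the node of $b$ on level $\alpha$. For unbounded $A\subseteq\omega_2$, $b$ oscillates on $A$ if for all $\alpha<\omega_2$ and all $\zeta<\omega_1$ there are $\beta>\alpha$ with $\beta\in A$ and $\xi>\zeta$ such that $b(\beta)=\xi$. *)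

(* Defs.v *)
(* Ordinals omega_1, omega_2 are represented abstractly by
   well-ordered types characterised up to isomorphism by their cardinal
   properties. *)
From Stdlib Require Import Relations Wellfounded.

Definition strict_well_order {W : Type} (lt : W -> W -> Prop) : Prop :=
  (forall x, ~ lt x x) /\
  (forall x y z, lt x y -> lt y z -> lt x z) /\
  (forall x y, lt x y \/ x = y \/ lt y x) /\
  well_founded lt.

Definition injects (X Y : Type) : Prop :=
  exists f : X -> Y, forall x y, f x = f y -> x = y.

Definition is_omega1 (W : Type) (lt : W -> W -> Prop) : Prop :=
  strict_well_order lt /\
  (forall a : W, injects {x : W | lt x a} nat) /\
  ~ injects W nat.

Definition is_omega2 (W1 W2 : Type) (lt2 : W2 -> W2 -> Prop) : Prop :=
  strict_well_order lt2 /\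
  (forall a : W2, injects {x : W2 | lt2 x a} W1) /\
  ~ injects W2 W1.

(* A tree (N, ltT) of height omega_2 with rank function ht : N -> W2:
   ltT is a strict partial order and, for every node t, ht maps the set of
   predecessors of t order-isomorphically onto the ordinal ht t
   (i.e. pred(t) is well-ordered of order type ht t). Every level is nonempty
   and there are no nodes of height >= omega_2 (ht lands in W2). *)
Definition tree_of_height {W2 N : Type} (lt2 : W2 -> W2 -> Prop)
    (ltT : N -> N -> Prop) (ht : N -> W2) : Prop :=
  (forall x, ~ ltT x x) /\
  (forall x y z, ltT x y -> ltT y z -> ltT x z) /\
  (forall t s s', ltT s t -> ltT s' t -> ltT s s' \/ s = s' \/ ltT s' s) /\
  (forall t s s', ltT s t -> ltT s' t -> (ltT s s' <-> lt2 (ht s) (ht s'))) /\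
  (forall t s, ltT s t -> lt2 (ht s) (ht t)) /\
  (forall t a, lt2 a (ht t) -> exists s, ltT s t /\ ht s = a) /\
  (forall a : W2, exists t, ht t = a).

Definition cofinal_branch {W2 N : Type} (ltT : N -> N -> Prop) (ht : N -> W2)
    (B : N -> Prop) : Prop :=
  (forall s t, B s -> B t -> ltT s t \/ s = t \/ ltT t s) /\
  (forall s t, B t -> ltT s t -> B s) /\
  (forall a : W2, exists t, B t /\ ht t = a).

(* omega_2-Kurepa tree: tree of height omega_2, levels of size <= aleph_1,
   at least aleph_3 (i.e. more than aleph_2) cofinal branches. *)
Definition kurepa_tree {W1 W2 N : Type} (lt2 : W2 -> W2 -> Prop)
    (ltT : N -> N -> Prop) (ht : N -> W2) : Prop :=
  tree_of_height lt2 ltT ht /\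
  (forall a : W2, injects {t : N | ht t = a} W1) /\
  (forall f : (N -> Prop) -> W2,
     exists B1 B2, cofinal_branch ltT ht B1 /\ cofinal_branch ltT ht B2 /\
       (exists t, ~ (B1 t <-> B2 t)) /\ f B1 = f B2).

(* b(beta) = xi, where b(beta) is the least xi such that tau(beta,xi) is the
   node of B on level beta *)
Definition branch_val {W1 W2 N : Type} (lt1 : W1 -> W1 -> Prop)
    (tau : W2 -> W1 -> N) (B : N -> Prop) (beta : W2) (xi : W1) : Prop :=
  B (tau beta xi) /\ (forall xi', lt1 xi' xi -> ~ B (tau beta xi')).

Definition unbounded {W2 : Type} (lt2 : W2 -> W2 -> Prop) (A : W2 -> Prop) : Prop :=
  forall a, exists b, lt2 a b /\ A b.

Definition oscillates {W1 W2 N : Type} (lt1 : W1 -> W1 -> Prop)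
    (lt2 : W2 -> W2 -> Prop) (tau : W2 -> W1 -> N) (B : N -> Prop)
    (A : W2 -> Prop) : Prop :=
  forall (alpha : W2) (zeta : W1), exists (beta : W2) (xi : W1),
    lt2 alpha beta /\ A beta /\ lt1 zeta xi /\ branch_val lt1 tau B beta xi.

(* Main.v *)
Require Import Defs.
From Stdlib Require Import Classical ClassicalEpsilon FunctionalExtensionality PropExtensionality Cantor Inverse_Image.

Definition inj_on {X Y : Type} (P : X -> Prop) (f : X -> Y) : Prop :=
  forall x y, P x -> P y -> f x = f y -> x = y.

Lemma wf_min {X} (R : X -> X -> Prop) (P : X -> Prop) :
  well_founded R -> forall x, P x -> exists y, P y /\ forall z, R z y -> ~ P z.
Proof.
  intros wf x. induction x as [x IH] using (well_founded_ind wf).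
  intros Px. destruct (classic (exists z, R z x /\ P z)) as [[z [Rz Pz]]|Hn].
  - exact (IH z Rz Pz).
  - exists x. split; [exact Px|]. intros z Rz Pz. apply Hn; eauto.
Qed.

Definition cond {X Y} (R : X -> X -> Prop) (Q : Y -> Prop) (x : X)
  (rec : forall x', R x' x -> option Y) (y : Y) : Prop :=
  Q y /\ forall x' (p : R x' x), rec x' p <> None /\ rec x' p <> Some y.

Definition step {X Y} (R : X -> X -> Prop) (Q : Y -> Prop) (x : X)
  (rec : forall x', R x' x -> option Y) : option Y :=
  match excluded_middle_informative (exists y, cond R Q x rec y) with
  | left e => Some (proj1_sig (constructive_indefinite_description _ e))
  | right _ => None
  end.

Definition FF {X Y} (R : X -> X -> Prop) (wfR : well_founded R) (Q : Y -> Prop)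
  : X -> option Y := Fix wfR (fun _ => option Y) (step R Q).

Lemma FF_eq {X Y : Type} (R : X -> X -> Prop) (wfR : well_founded R) (Q : Y -> Prop) (x : X) :
  FF R wfR Q x = step R Q x (fun x' _ => FF R wfR Q x').
Proof.
  unfold FF. apply (Fix_eq wfR (fun _ => option Y) (step R Q)). intros x0 f g Hfg.
  assert (f = g) as ->; [|reflexivity].
  apply functional_extensionality_dep; intro y.
  apply functional_extensionality_dep; intro p. apply Hfg.
Qed.

Lemma FF_some {X Y : Type} (R : X -> X -> Prop) (wfR : well_founded R) (Q : Y -> Prop) (x : X) (y : Y) :
  FF R wfR Q x = Some y -> Q y /\ forall x', R x' x ->
    FF R wfR Q x' <> None /\ FF R wfR Q x' <> Some y.
Proof.
  rewrite FF_eq. unfold step.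
  destruct (excluded_middle_informative _) as [e|n]; [|discriminate].
  destruct (constructive_indefinite_description _ e) as [y' [Qy Hy]]; simpl.
  intro E; injection E as <-. split; [exact Qy|].
  intros x' r. exact (Hy x' r).
Qed.

Lemma FF_none {X Y : Type} (R : X -> X -> Prop) (wfR : well_founded R) (Q : Y -> Prop) (x : X) :
  FF R wfR Q x = None -> forall y, Q y -> exists x', R x' x /\
    (FF R wfR Q x' = None \/ FF R wfR Q x' = Some y).
Proof.
  rewrite FF_eq. unfold step.
  destruct (excluded_middle_informative _) as [e|n]; [discriminate|].
  intros _ y Qy. apply NNPP; intro C. apply n. exists y. split; auto.
  intros x' r. split; intro E; apply C; exists x'; auto.
Qed.

Lemma comp {X Y} (R : X -> X -> Prop) (Q : Y -> Prop) :
  well_founded R -> (forall x y, R x y \/ x = y \/ R y x) ->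
  (exists F : X -> Y, (forall x, Q (F x)) /\ forall x1 x2, F x1 = F x2 -> x1 = x2) \/
  (exists x (h : Y -> X), (forall y, Q y -> R (h y) x) /\ inj_on Q h).
Proof.
  intros wfR triR.
  destruct (classic (exists x, FF R wfR Q x = None)) as [[x0 Hx0]|Hall].
  - right. destruct (wf_min R (fun x => FF R wfR Q x = None) wfR x0 Hx0) as [x [Hx Hmin]].
    assert (Hh : forall y, exists x', Q y -> R x' x /\ FF R wfR Q x' = Some y).
    { intro y. destruct (classic (Q y)) as [Qy|nQ].
      - destruct (FF_none R wfR Q x Hx y Qy) as [x' [r [E|E]]].
        + exfalso. exact (Hmin x' r E).
        + exists x'. auto.
      - exists x. intro; contradiction. }
    destruct (choice _ Hh) as [h Hh']. exists x, h. split.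
    + intros y Qy. apply (Hh' y Qy).
    + intros y1 y2 Q1 Q2 E. destruct (Hh' y1 Q1) as [_ E1].
      destruct (Hh' y2 Q2) as [_ E2]. rewrite E in E1. rewrite E1 in E2.
      injection E2. auto.
  - left. assert (Hs : forall x, exists y, FF R wfR Q x = Some y).
    { intro x. destruct (FF R wfR Q x) as [y|] eqn:E. eauto. exfalso; apply Hall; eauto. }
    destruct (choice _ Hs) as [F HF]. exists F. split.
    + intro x. exact (proj1 (FF_some R wfR Q x _ (HF x))).
    + intros x1 x2 E. destruct (triR x1 x2) as [r|[e|r]]; auto; exfalso.
      * destruct (FF_some R wfR Q x2 _ (HF x2)) as [_ H]. apply (proj2 (H x1 r)).
        rewrite HF, E. reflexivity.
      * destruct (FF_some R wfR Q x1 _ (HF x1)) as [_ H]. apply (proj2 (H x2 r)).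
        rewrite HF, E. reflexivity.
Qed.

Lemma sig_to_on {X Y} (P : X -> Prop) (y0 : Y) :
  injects {x | P x} Y -> exists f : X -> Y, inj_on P f.
Proof.
  intros [g Hg].
  exists (fun x => match excluded_middle_informative (P x) with
           | left p => g (exist _ x p) | right _ => y0 end).
  intros x y Px Py.
  destruct (excluded_middle_informative (P x)); [|contradiction].
  destruct (excluded_middle_informative (P y)); [|contradiction].
  intro E. apply Hg in E. apply (f_equal (@proj1_sig _ _)) in E. exact E.
Qed.

Definition lex2 {A B} (RA : A -> A -> Prop) (RB : B -> B -> Prop) (p q : A * B) : Prop :=
  RA (fst p) (fst q) \/ (fst p = fst q /\ RB (snd p) (snd q)).

Lemma wf_lex2 {A B} (RA : A -> A -> Prop) (RB : B -> B -> Prop) :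
  well_founded RA -> well_founded RB -> well_founded (lex2 RA RB).
Proof.
  intros wA wB [a b]. revert b.
  induction a as [a IHa] using (well_founded_ind wA).
  intro b. induction b as [b IHb] using (well_founded_ind wB).
  constructor. intros [a' b'] [H|[e H]]; simpl in *.
  - apply IHa. exact H.
  - subst a'. apply IHb. exact H.
Qed.

Lemma tri_lex2 {A B} (RA : A -> A -> Prop) (RB : B -> B -> Prop) :
  (forall x y, RA x y \/ x = y \/ RA y x) -> (forall x y, RB x y \/ x = y \/ RB y x) ->
  forall p q, lex2 RA RB p q \/ p = q \/ lex2 RA RB q p.
Proof.
  intros tA tB [a b] [c d]. unfold lex2; simpl.
  destruct (tA a c) as [h|[h|h]]; auto. subst c.
  destruct (tB b d) as [h|[h|h]]; auto. subst; auto.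
Qed.

Definition le_of {W} (lt : W -> W -> Prop) x y := lt x y \/ x = y.

Definition mx {W} (lt : W -> W -> Prop) (a b : W) : W :=
  if excluded_middle_informative (lt a b) then b else a.

Definition gkey {W} (lt : W -> W -> Prop) (p : W * W) : W * (W * W) :=
  (mx lt (fst p) (snd p), p).

Definition god {W} (lt : W -> W -> Prop) (p q : W * W) : Prop :=
  lex2 lt (lex2 lt lt) (gkey lt p) (gkey lt q).

Lemma swo_parts {W} (lt : W -> W -> Prop) : strict_well_order lt ->
  (forall x, ~ lt x x) /\ (forall x y z, lt x y -> lt y z -> lt x z) /\
  (forall x y, lt x y \/ x = y \/ lt y x) /\ well_founded lt.
Proof. auto. Qed.

Lemma mx_le {W} (lt : W -> W -> Prop) : strict_well_order lt -> forall a b,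
  le_of lt a (mx lt a b) /\ le_of lt b (mx lt a b).
Proof.
  intros [irr [tr [tri wf]]] a b. unfold mx, le_of.
  destruct (excluded_middle_informative (lt a b)) as [h|h].
  - auto.
  - split; auto. destruct (tri a b) as [x|[x|x]]; auto. contradiction.
Qed.

Lemma le_trans' {W} (lt : W -> W -> Prop) : strict_well_order lt -> forall a b c,
  le_of lt a b -> le_of lt b c -> le_of lt a c.
Proof.
  intros [irr [tr [tri wf]]] a b c [h|h] [k|k]; unfold le_of; subst; eauto.
Qed.

Lemma god_wf {W} (lt : W -> W -> Prop) : strict_well_order lt -> well_founded (god lt).
Proof.
  intros [irr [tr [tri wf]]]. unfold god.
  apply (wf_inverse_image _ _ (lex2 lt (lex2 lt lt)) (gkey lt)).
  apply wf_lex2; auto. apply wf_lex2; auto.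
Qed.

Lemma god_tri {W} (lt : W -> W -> Prop) : strict_well_order lt ->
  forall p q, god lt p q \/ p = q \/ god lt q p.
Proof.
  intros [irr [tr [tri wf]]] p q. unfold god.
  destruct (tri_lex2 lt (lex2 lt lt) tri (tri_lex2 lt lt tri tri) (gkey lt p) (gkey lt q))
    as [h|[h|h]]; auto.
  right; left. apply (f_equal snd) in h. exact h.
Qed.

Lemma god_seg {W} (lt : W -> W -> Prop) : strict_well_order lt -> forall p q,
  god lt q p -> le_of lt (fst q) (mx lt (fst p) (snd p)) /\
                le_of lt (snd q) (mx lt (fst p) (snd p)).
Proof.
  intros Hs p q H.
  assert (le_of lt (mx lt (fst q) (snd q)) (mx lt (fst p) (snd p))) as Hm.
  { unfold god, lex2, gkey in H; simpl in H. destruct H as [H|[H _]]; [left|right]; auto. }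
  destruct (mx_le lt Hs (fst q) (snd q)).
  split; eapply le_trans'; eauto.
Qed.

Lemma sq {W K} (lt : W -> W -> Prop) : strict_well_order lt ->
  (forall a, exists e : W -> K, inj_on (fun x => lt x a) e) ->
  ~ injects W K ->
  (exists c : K * K -> K, forall x y, c x = c y -> x = y) ->
  (exists o : option K -> K, forall x y, o x = o y -> x = y) ->
  exists c : W * W -> W, forall x y, c x = c y -> x = y.
Proof.
  intros Hs Hseg HnW [c Hc] [o Ho].
  destruct (comp (god lt) (fun _ : W => True) (god_wf lt Hs) (god_tri lt Hs))
    as [[F [_ HF]]|[x [h [Hh Hinj]]]].
  - exists F. exact HF.
  - exfalso. apply HnW.
    set (m := mx lt (fst x) (snd x)).
    destruct (Hseg m) as [e He].
    set (cd := fun w => match excluded_middle_informative (lt w m) with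
                        | left _ => Some (e w) | right _ => None end).
    assert (Hcd : forall w1 w2, le_of lt w1 m -> le_of lt w2 m -> cd w1 = cd w2 -> w1 = w2).
    { intros w1 w2 H1 H2. unfold cd.
      destruct (excluded_middle_informative (lt w1 m)) as [a1|a1];
      destruct (excluded_middle_informative (lt w2 m)) as [a2|a2]; intro E;
        try discriminate.
      - injection E. apply He; auto.
      - destruct H1; [contradiction|]. destruct H2; [contradiction|]. congruence. }
    exists (fun y => c (o (cd (fst (h y))), o (cd (snd (h y))))).
    intros y1 y2 E. apply Hc in E. injection E as E1 E2.
    apply Ho in E1. apply Ho in E2.
    destruct (god_seg lt Hs x (h y1) (Hh y1 I)).
    destruct (god_seg lt Hs x (h y2) (Hh y2 I)).
    apply Hinj; auto.
    destruct (h y1), (h y2); simpl in *. f_equal; apply Hcd; auto.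
Qed.

Lemma two_elts {W K} (k0 : K) : ~ injects W K -> exists a b : W, a <> b.
Proof.
  intros H. apply NNPP; intro C. apply H. exists (fun _ => k0).
  intros x y _. apply NNPP; intro D. apply C. eauto.
Qed.

Lemma w1_two (W1 : Type) lt1 : is_omega1 W1 lt1 -> exists a b : W1, a <> b.
Proof. intros [_ [_ H]]. exact (two_elts 0 H). Qed.

Lemma w1_seg (W1 : Type) lt1 : is_omega1 W1 lt1 ->
  forall a, exists e : W1 -> nat, inj_on (fun x => lt1 x a) e.
Proof. intros [_ [H _]] a. apply sig_to_on; [exact 0|]. apply H. Qed.

Lemma nat_pair : exists c : nat * nat -> nat, forall x y, c x = c y -> x = y.
Proof.
  exists to_nat. intros x y E. rewrite <- (cancel_of_to x), <- (cancel_of_to y), E. reflexivity.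
Qed.

Lemma opt_from_pair {K} (a b : K) : a <> b ->
  (exists c : K * K -> K, forall x y, c x = c y -> x = y) ->
  exists o : option K -> K, forall x y, o x = o y -> x = y.
Proof.
  intros ab [c Hc].
  exists (fun x => match x with Some x => c (x, b) | None => c (a, a) end).
  intros [x|] [y|] E; apply Hc in E; try injection E; intros; subst; auto;
    exfalso; apply ab; congruence.
Qed.

Lemma w1_sq (W1 : Type) lt1 : is_omega1 W1 lt1 ->
  exists c : W1 * W1 -> W1, forall x y, c x = c y -> x = y.
Proof.
  intros H. apply (@sq W1 nat lt1).
  - apply H.
  - apply w1_seg; auto.
  - apply H.
  - apply nat_pair.
  - exists (fun x => match x with Some n => S n | None => 0 end).
    intros [x|] [y|] E; congruence.
Qed.

Lemma w1_opt (W1 : Type) lt1 : is_omega1 W1 lt1 ->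
  exists o : option W1 -> W1, forall x y, o x = o y -> x = y.
Proof.
  intros H. destruct (w1_two W1 lt1 H) as [a [b ab]].
  apply (opt_from_pair a b ab). apply (w1_sq W1 lt1 H).
Qed.

Lemma w2_seg (W1 W2 : Type) lt1 lt2 : is_omega1 W1 lt1 -> is_omega2 W1 W2 lt2 ->
  forall a, exists e : W2 -> W1, inj_on (fun x => lt2 x a) e.
Proof.
  intros H1 [_ [H _]] a. destruct (w1_two W1 lt1 H1) as [w _].
  apply sig_to_on; [exact w|]. apply H.
Qed.

Lemma w2_sq (W1 W2 : Type) lt1 lt2 : is_omega1 W1 lt1 -> is_omega2 W1 W2 lt2 ->
  exists c : W2 * W2 -> W2, forall x y, c x = c y -> x = y.
Proof.
  intros H1 H2. apply (@sq W2 W1 lt2).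
  - apply H2.
  - apply (w2_seg W1 W2 lt1 lt2); auto.
  - apply H2.
  - apply (w1_sq W1 lt1 H1).
  - apply (w1_opt W1 lt1 H1).
Qed.

Lemma w1_w2 (W1 W2 : Type) lt1 lt2 : is_omega1 W1 lt1 -> is_omega2 W1 W2 lt2 ->
  exists j : W1 -> W2, forall x y, j x = j y -> x = y.
Proof.
  intros H1 H2. destruct H1 as [[i1 [t1 [tri1 wf1]]] _].
  destruct (comp lt1 (fun _ : W2 => True) wf1 tri1) as [[F [_ HF]]|[x [h [_ Hh]]]].
  - eauto.
  - exfalso. apply (proj2 (proj2 H2)). exists h. intros a b E. apply Hh; auto.
Qed.

Lemma bound (W1 W2 K : Type) lt1 lt2 : is_omega1 W1 lt1 -> is_omega2 W1 W2 lt2 ->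
  injects K W1 -> forall g : K -> W2, exists b, forall k, lt2 (g k) b.
Proof.
  intros H1 H2 [ik Hik] g. apply NNPP; intro C.
  assert (Hk : forall b, exists k, ~ lt2 (g k) b).
  { intro b. apply NNPP; intro D. apply C. exists b. intro k. apply NNPP; intro E. apply D; eauto. }
  destruct (choice _ Hk) as [kf Hkf].
  assert (Hseg := w2_seg W1 W2 lt1 lt2 H1 H2).
  destruct (choice _ Hseg) as [e He].
  destruct (w1_sq W1 lt1 H1) as [c Hc]. destruct (w1_opt W1 lt1 H1) as [o Ho].
  destruct H2 as [[i2 [t2 [tri2 wf2]]] [_ Hn]]. apply Hn.
  exists (fun b => c (ik (kf b),
     o (match excluded_middle_informative (lt2 b (g (kf b))) with
        | left _ => Some (e (g (kf b)) b) | right _ => None end))).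
  intros b1 b2 E. apply Hc in E. injection E as E1 E2. apply Hik in E1.
  apply Ho in E2. rewrite <- E1 in E2.
  destruct (excluded_middle_informative (lt2 b1 (g (kf b1)))) as [a1|a1];
  destruct (excluded_middle_informative (lt2 b2 (g (kf b1)))) as [a2|a2];
    try discriminate.
  - injection E2. apply He; auto.
  - assert (b1 = g (kf b1)).
    { destruct (tri2 b1 (g (kf b1))) as [x|[x|x]]; auto. contradiction. exfalso; apply (Hkf b1 x). }
    assert (b2 = g (kf b2)).
    { destruct (tri2 b2 (g (kf b2))) as [x|[x|x]]; auto. rewrite <- E1 in x. contradiction.
      exfalso; apply (Hkf b2 x). }
    congruence.
Qed.

Lemma sep {W2 N : Type} (lt2 : W2 -> W2 -> Prop) (ltT : N -> N -> Prop) (ht : N -> W2)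
  (B1 B2 : N -> Prop) t u :
  strict_well_order lt2 -> tree_of_height lt2 ltT ht ->
  cofinal_branch ltT ht B1 -> cofinal_branch ltT ht B2 ->
  B1 u -> B2 u -> ~ (B1 t <-> B2 t) -> lt2 (ht t) (ht u) -> False.
Proof.
  intros [irr [tr _]] [_ [_ [_ [_ [Hht _]]]]] [c1 [d1 _]] [c2 [d2 _]] u1 u2 D L.
  destruct (classic (B1 t)) as [b1|nb1].
  - assert (~ B2 t) as nb2 by (intro; apply D; tauto).
    destruct (c1 t u b1 u1) as [x|[x|x]].
    + apply nb2. eapply d2; eauto.
    + subst. contradiction.
    + apply (irr (ht t)). eapply tr; eauto.
  - assert (B2 t) as b2 by (apply NNPP; intro; apply D; tauto).
    destruct (c2 t u b2 u2) as [x|[x|x]].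
    + apply nb1. eapply d1; eauto.
    + subst. contradiction.
    + apply (irr (ht t)). eapply tr; eauto.
Qed.

Lemma bv_ex {W1 W2 N : Type} (lt1 : W1 -> W1 -> Prop) (ltT : N -> N -> Prop) (ht : N -> W2)
  (tau : W2 -> W1 -> N) (B : N -> Prop) beta :
  well_founded lt1 ->
  (forall alpha t, ht t = alpha -> exists xi, tau alpha xi = t) ->
  cofinal_branch ltT ht B -> exists xi, branch_val lt1 tau B beta xi.
Proof.
  intros wf Hs [_ [_ Hc]]. destruct (Hc beta) as [u [Bu hu]].
  destruct (Hs beta u hu) as [xi0 E].
  destruct (wf_min lt1 (fun xi => B (tau beta xi)) wf xi0) as [xi [P M]].
  - rewrite E; exact Bu.
  - exists xi. split; auto.
Qed.

Definition nonosc {W1 W2 N : Type} (lt1 : W1 -> W1 -> Prop) (lt2 : W2 -> W2 -> Prop)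
  (tau : W2 -> W1 -> N) (A : W2 -> W2 -> Prop) (B : N -> Prop) (t : W2 * (W2 * W1)) : Prop :=
  forall beta xi, lt2 (fst (snd t)) beta -> A (fst t) beta ->
    branch_val lt1 tau B beta xi -> ~ lt1 (snd (snd t)) xi.

Lemma cnt (W1 W2 N : Type) lt1 lt2 (ltT : N -> N -> Prop) (ht : N -> W2)
  (tau : W2 -> W1 -> N) (A : W2 -> W2 -> Prop) :
  is_omega1 W1 lt1 -> is_omega2 W1 W2 lt2 ->
  tree_of_height lt2 ltT ht ->
  (forall alpha xi, ht (tau alpha xi) = alpha) ->
  (forall alpha t, ht t = alpha -> exists xi, tau alpha xi = t) ->
  (forall iota, unbounded lt2 (A iota)) ->
  forall t, exists e : (N -> Prop) -> W1,
    inj_on (fun B => cofinal_branch ltT ht B /\ nonosc lt1 lt2 tau A B t) e.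
Proof.
  intros H1 H2 HT Htau Hsurj HA t.
  pose proof H1 as [[i1 [t1 [tri1 wf1]]] [seg1 Hn1]].
  pose proof H2 as [S2 _]. pose proof S2 as [i2 [t2 [tri2 wf2]]].
  destruct (comp lt1 (fun B => cofinal_branch ltT ht B /\ nonosc lt1 lt2 tau A B t) wf1 tri1)
    as [[F [HF Finj]]|[x [h [_ Hh]]]]; [|eauto].
  exfalso.
  assert (HD : forall p : W1 * W1, exists u, fst p <> snd p -> ~ (F (fst p) u <-> F (snd p) u)).
  { intros [i j]; simpl. destruct (classic (i = j)) as [e|ne].
    - destruct (w1_two W1 lt1 H1) as [a _].
      exists (tau (fst t) a). intro; contradiction.
    - apply NNPP; intro C. apply ne. apply Finj.
      apply functional_extensionality; intro u. apply propositional_extensionality.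
      apply NNPP; intro D. apply C. exists u. auto. }
  destruct (choice _ HD) as [D HDp].
  destruct (w1_sq W1 lt1 H1) as [c Hc].
  destruct (bound W1 W2 (W1 * W1) lt1 lt2 H1 H2 (ex_intro _ c Hc) (fun p => ht (D p))) as [b0 Hb0].
  assert (exists m, le_of lt2 b0 m /\ le_of lt2 (fst (snd t)) m) as [m [Hm1 Hm2]].
  { destruct (tri2 b0 (fst (snd t))) as [x|[x|x]].
    - exists (fst (snd t)). split; [left|right]; auto.
    - exists b0. subst. split; right; auto.
    - exists b0. split; [right|left]; auto. }
  destruct (HA (fst t) m) as [b1 [Lb1 Ab1]].
  assert (Hv : forall i, exists xi, branch_val lt1 tau (F i) b1 xi).
  { intro i. apply (bv_ex lt1 ltT ht); auto. apply HF. }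
  destruct (choice _ Hv) as [v Hvp].
  assert (LL : forall y, le_of lt2 y m -> lt2 y b1).
  { intros y [k|k]; subst; eauto. }
  assert (Hz : forall i, ~ lt1 (snd (snd t)) (v i)).
  { intro i. apply (proj2 (HF i) b1); auto. }
  assert (vinj : forall i j, v i = v j -> i = j).
  { intros i j E. apply NNPP; intro ne.
    apply (sep lt2 ltT ht (F i) (F j) (D (i, j)) (tau b1 (v i)) S2 HT).
    - apply HF.
    - apply HF.
    - apply (Hvp i).
    - rewrite E. apply (Hvp j).
    - apply (HDp (i, j)). exact ne.
    - rewrite Htau. apply LL. eapply le_trans'; [exact S2| |exact Hm1]. left. apply Hb0. }
  destruct (w1_seg W1 lt1 H1 (snd (snd t))) as [e He].
  apply Hn1.
  exists (fun i => match excluded_middle_informative (lt1 (v i) (snd (snd t))) with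
                   | left _ => S (e (v i)) | right _ => 0 end).
  intros i j.
  destruct (excluded_middle_informative (lt1 (v i) (snd (snd t)))) as [a1|a1];
  destruct (excluded_middle_informative (lt1 (v j) (snd (snd t)))) as [a2|a2];
    intro E; try discriminate.
  - injection E; intro E'. apply vinj. apply He; auto.
  - apply vinj.
    destruct (tri1 (v i) (snd (snd t))) as [x|[x|x]]; [contradiction| |exfalso; exact (Hz i x)].
    destruct (tri1 (v j) (snd (snd t))) as [y|[y|y]]; [contradiction| |exfalso; exact (Hz j y)].
    congruence.
Qed.

Theorem lemma9 (W1 : Type) (lt1 : W1 -> W1 -> Prop)
  (W2 : Type) (lt2 : W2 -> W2 -> Prop)
  (N : Type) (ltT : N -> N -> Prop) (ht : N -> W2)
  (tau : W2 -> W1 -> N) (A : W2 -> W2 -> Prop) :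
  is_omega1 W1 lt1 ->
  is_omega2 W1 W2 lt2 ->
  @kurepa_tree W1 W2 N lt2 ltT ht ->
  (forall alpha xi, ht (tau alpha xi) = alpha) ->
  (forall alpha t, ht t = alpha -> exists xi, tau alpha xi = t) ->
  (forall iota, unbounded lt2 (A iota)) ->
  exists B : N -> Prop, cofinal_branch ltT ht B /\
    forall iota, oscillates lt1 lt2 tau B (A iota).
Proof.
  intros H1 H2 HK Htau Hsurj HA.
  destruct HK as [HT [_ Hkur]].
  apply NNPP; intro C.
  assert (Hno : forall B, cofinal_branch ltT ht B -> exists t, nonosc lt1 lt2 tau A B t).
  { intros B cB. apply NNPP; intro D. apply C. exists B. split; auto.
    intros iota alpha zeta. apply NNPP; intro E. apply D. exists (iota, (alpha, zeta)).
    intros beta xi L Ab bv Lz. apply E. exists beta, xi. auto. }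
  destruct (w1_two W1 lt1 H1) as [w1 _].
  destruct (w1_w2 W1 W2 lt1 lt2 H1 H2) as [j Hj].
  assert (HT0 : forall B, exists t, cofinal_branch ltT ht B -> nonosc lt1 lt2 tau A B t).
  { intro B. destruct (classic (cofinal_branch ltT ht B)) as [cB|nB].
    - destruct (Hno B cB) as [t Ht]. eauto.
    - exists (j w1, (j w1, w1)). intro; contradiction. }
  destruct (choice _ HT0) as [T0 HT0p].
  destruct (choice _ (cnt W1 W2 N lt1 lt2 ltT ht tau A H1 H2 HT Htau Hsurj HA)) as [E HE].
  destruct (w2_sq W1 W2 lt1 lt2 H1 H2) as [c2 Hc2].
  destruct (w1_sq W1 lt1 H1) as [c1 Hc1].
  destruct (Hkur (fun B => c2 (fst (T0 B), c2 (fst (snd (T0 B)),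
                     j (c1 (snd (snd (T0 B)), E (T0 B) B))))))
    as [B1 [B2 [cB1 [cB2 [[u Du] Ef]]]]].
  apply Hc2 in Ef; injection Ef as Ea Eb. apply Hc2 in Eb; injection Eb as Eb Ec.
  apply Hj, Hc1 in Ec; injection Ec as Ec Ed.
  assert (ET : T0 B1 = T0 B2).
  { clear Ed. destruct (T0 B1) as [? [? ?]], (T0 B2) as [? [? ?]]; simpl in *; congruence. }
  rewrite <- ET in Ed.
  apply (HE (T0 B1)) in Ed.
  - subst. apply Du. tauto.
  - split; auto.
  - split; auto. rewrite ET. auto.
Qed.
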